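(* Let $X$ be a finite $T_0$ topological space, $\mathcal V$ a multivector field on $X$ with $X$ invariant, and $\mathcal M=\{M_p\mid p\in\mathbb P\}$ a Morse predecomposition of $X$. Let $C\subset X$ be an isolated invariant set which is strongly connected in $G_{\mathcal V}$. If there is $r\in\mathbb P_C$ such that $M_r$ is saturated in $X$, then $C\subset M_r$; in particular $\mathbb P_C=\{r\}$.
   Context: Notation: $\operatorname{cl}$ is closure; $A\subset X$ is locally closed if $\operatorname{cl}A\setminus A$ is closed. A multivector field $\mathcal V$ on $X$ is a partition of $X$ into locally closed sets (multivectors); $[x]_{\mathcal V}$ is the multivector containing $x$. A multivector $V$ is critical if $H(\operatorname{cl}V,\operatorname{cl}V\setminus V)$ (relative singular homology) is nontrivial, regular otherwise. $A$ is $\mathcal V$-compatible if it is a union of multivectors; $\langle A\rangle_{\mathcal V}$ is the smallest locally closed $\mathcal V$-compatible set containing $A$. $\Pi_{\mathcal V}(x)=\operatorname{cl}\{x\}\cup[x]_{\mathcal V}$; $G_{\mathcal V}$ is the digraph on $X$ with an edge $x\to y$ iff $y\in\Pi_{\mathcal V}(x)$; a set $A$ is strongly connected in $G_{\mathcal V}$ if for all $v,w\in A$ there is a walk of positive length from $v$ to $w$ with all vertices in $A$. A solution is a partial map $\gamma:\mathbb Z\nrightarrow X$ with domain an integer interval and $\gamma(t+1)\in\Pi_{\mathcal V}(\gamma(t))$; a path has finite domain; a full solution has domain $\mathbb Z$. $\alpha(\gamma)=\langle\bigcap_{t\le0}\gamma((-\infty,t])\rangle_{\mathcal V}$, $\omega(\gamma)=\langle\bigcap_{t\ge0}\gamma([t,\infty))\rangle_{\mathcal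 V}$. A full solution is essential unless $\alpha(\gamma)$ or $\omega(\gamma)$ lies in a single regular multivector; an essential solution in $A$ has image in $A$. $\operatorname{Inv}S$ is the set of $x\in S$ with an essential solution $\gamma$ in $S$, $\gamma(0)=x$; $S$ is invariant if $\operatorname{Inv}S=S$. An invariant $S$ is isolated invariant if there is a closed $N\supset\Pi_{\mathcal V}(S)$ such that every path in $N$ with endpoints in $S$ has image in $S$. A link from $S_1$ to $S_2$ is a full solution with $\alpha(\gamma)\cap S_1\ne\emptyset\ne\omega(\gamma)\cap S_2$. A Morse predecomposition of $X$ is an indexed family $\{M_p\mid p\in\mathbb P\}$ of mutually disjoint isolated invariant subsets such that every essential solution in $X$ is a link from some $M_p$ to some $M_q$. $\mathbb P_C=\{p\in\mathbb P\mid M_p\cap C\ne\emptyset\}$. An invariant $T\subset X$ is saturated in $X$ if every essential solution $\gamma$ in $X$ with $\alpha(\gamma)\subset T$ and $\omega(\gamma)\subset T$ has $\operatorname{im}\gamma\subset T$. *)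

(* Defs.v *)
From Stdlib Require Import Reals ZArith List ClassicalEpsilon.
Import ListNotations.

Set Implicit Arguments.

Definition incl_set {X : Type} (A B : X -> Prop) : Prop := forall x, A x -> B x.
Definition setD {X : Type} (A B : X -> Prop) : X -> Prop := fun x => A x /\ ~ B x.

Definition is_topology {X : Type} (opn : (X -> Prop) -> Prop) : Prop :=
  opn (fun _ => True) /\ opn (fun _ => False) /\
  (forall U V, opn U -> opn V -> opn (fun x => U x /\ V x)) /\
  (forall F : (X -> Prop) -> Prop, (forall U, F U -> opn U) ->
      opn (fun x => exists U, F U /\ U x)).

Definition finite_T0_space {X : Type} (opn : (X -> Prop) -> Prop) : Prop :=
  is_topology opn /\
  (exists l : list X, forall x, In x l) /\
  (forall x y : X, x <> y -> exists U, opn U /\ ~ (U x <-> U y)).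

Definition is_closed {X : Type} (opn : (X -> Prop) -> Prop) (A : X -> Prop) : Prop :=
  opn (fun x => ~ A x).

Definition cl {X : Type} (opn : (X -> Prop) -> Prop) (A : X -> Prop) : X -> Prop :=
  fun x => forall U, opn U -> U x -> exists y, U y /\ A y.

Definition locally_closed {X : Type} (opn : (X -> Prop) -> Prop) (A : X -> Prop) : Prop :=
  is_closed opn (setD (cl opn A) A).

(* points of R^(n+1) are encoded as functions nat -> R; the standard
   n-simplex uses coordinates 0..n and vanishes elsewhere *)
Definition simplex (n : nat) (p : nat -> R) : Prop :=
  (forall i, (i <= n)%nat -> (0 <= p i)%R) /\
  (forall i, (n < i)%nat -> p i = 0%R) /\
  sum_f_R0 p n = 1%R.

Definition simplex_open (n : nat) (S : (nat -> R) -> Prop) : Prop :=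
  forall p, simplex n p -> S p ->
    exists eps : R, (0 < eps)%R /\
      forall q, simplex n q -> (forall i, (i <= n)%nat -> (Rabs (q i - p i) < eps)%R) -> S q.

Definition sing_simplex {X : Type} (opn : (X -> Prop) -> Prop) (n : nat)
  (s : (nat -> R) -> X) : Prop :=
  forall U, opn U -> simplex_open n (fun p => U (s p)).

Definition face (i : nat) (p : nat -> R) : nat -> R :=
  fun j => if Nat.ltb j i then p j else if Nat.eqb j i then 0%R else p (j - 1)%nat.

Definition chain (X : Type) := list (Z * ((nat -> R) -> X)).

Definition same_simplex {X : Type} (n : nat) (s t : (nat -> R) -> X) : Prop :=
  forall p, simplex n p -> s p = t p.

Definition coef {X : Type} (n : nat) (c : chain X) (t : (nat -> R) -> X) : Z :=
  fold_right (fun e acc =>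
     ((if excluded_middle_informative (same_simplex n (snd e) t) then fst e else 0%Z)
      + acc)%Z) 0%Z c.

Definition bd {X : Type} (n : nat) (c : chain X) : chain X :=
  match n with
  | O => []
  | S m => flat_map (fun e =>
             map (fun i => ((if Nat.even i then fst e else - fst e)%Z,
                            fun p => snd e (face i p)))
                 (seq 0 (m + 2))) c
  end.

Definition chain_in {X : Type} (opn : (X -> Prop) -> Prop) (n : nat)
  (A : X -> Prop) (c : chain X) : Prop :=
  Forall (fun e => sing_simplex opn n (snd e) /\
                   forall p, simplex n p -> A (snd e p)) c.

(* the n-chain c, as an element of the free abelian group, is supported in A *)
Definition supported_in {X : Type} (n : nat) (A : X -> Prop) (c : chain X) : Prop :=
  forall t, coef n c t <> 0%Z -> forall p, simplex n p -> A (t p).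

(* H_n(A, B) <> 0 for some n: a relative cycle which is not a relative boundary *)
Definition rel_homology_nontrivial {X : Type} (opn : (X -> Prop) -> Prop)
  (A B : X -> Prop) : Prop :=
  exists (n : nat) (c : chain X),
    chain_in opn n A c /\ supported_in (n - 1) B (bd n c) /\
    ~ (exists (d e : chain X), chain_in opn (S n) A d /\ chain_in opn n B e /\
         forall t, coef n c t = (coef n (bd (S n) d) t + coef n e t)%Z).

(* a multivector field is a partition of X; mv x y means y \in [x]_V *)
Definition multivector_field {X : Type} (opn : (X -> Prop) -> Prop)
  (mv : X -> X -> Prop) : Prop :=
  (forall x, mv x x) /\ (forall x y, mv x y -> mv y x) /\
  (forall x y z, mv x y -> mv y z -> mv x z) /\
  (forall x, locally_closed opn (mv x)).

Definition critical {X : Type} (opn : (X -> Prop) -> Prop) (V : X -> Prop) : Prop :=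
  rel_homology_nontrivial opn (cl opn V) (setD (cl opn V) V).

Definition regular {X : Type} (opn : (X -> Prop) -> Prop) (V : X -> Prop) : Prop :=
  ~ critical opn V.

Definition compatible {X : Type} (mv : X -> X -> Prop) (A : X -> Prop) : Prop :=
  forall x y, A x -> mv x y -> A y.

Definition lc_hull {X : Type} (opn : (X -> Prop) -> Prop) (mv : X -> X -> Prop)
  (A : X -> Prop) : X -> Prop :=
  fun x => forall B, locally_closed opn B -> compatible mv B -> incl_set A B -> B x.

Definition Pi {X : Type} (opn : (X -> Prop) -> Prop) (mv : X -> X -> Prop)
  (x : X) : X -> Prop :=
  fun y => cl opn (fun z => z = x) y \/ mv x y.

Definition Pi_set {X : Type} (opn : (X -> Prop) -> Prop) (mv : X -> X -> Prop)
  (S : X -> Prop) : X -> Prop :=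
  fun y => exists x, S x /\ Pi opn mv x y.

(* walks of positive length in G_V with all vertices in A *)
Inductive walk_in {X : Type} (opn : (X -> Prop) -> Prop) (mv : X -> X -> Prop)
  (A : X -> Prop) : X -> X -> Prop :=
| walk_one : forall v w, A v -> A w -> Pi opn mv v w -> walk_in opn mv A v w
| walk_cons : forall v u w, A v -> Pi opn mv v u -> walk_in opn mv A u w ->
    walk_in opn mv A v w.

Definition strongly_connected {X : Type} (opn : (X -> Prop) -> Prop)
  (mv : X -> X -> Prop) (A : X -> Prop) : Prop :=
  forall v w, A v -> A w -> walk_in opn mv A v w.

Definition full_solution {X : Type} (opn : (X -> Prop) -> Prop) (mv : X -> X -> Prop)
  (g : Z -> X) : Prop :=
  forall t, Pi opn mv (g t) (g (t + 1)%Z).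

(* a path: solution with finite (nonempty interval) domain, as a list *)
Fixpoint is_path {X : Type} (opn : (X -> Prop) -> Prop) (mv : X -> X -> Prop)
  (x : X) (l : list X) : Prop :=
  match l with
  | [] => True
  | y :: l' => Pi opn mv x y /\ is_path opn mv y l'
  end.

Definition alpha_raw {X : Type} (g : Z -> X) : X -> Prop :=
  fun x => forall t, (t <= 0)%Z -> exists s, (s <= t)%Z /\ g s = x.
Definition omega_raw {X : Type} (g : Z -> X) : X -> Prop :=
  fun x => forall t, (0 <= t)%Z -> exists s, (t <= s)%Z /\ g s = x.

Definition alpha {X : Type} (opn : (X -> Prop) -> Prop) (mv : X -> X -> Prop)
  (g : Z -> X) : X -> Prop := lc_hull opn mv (alpha_raw g).
Definition omega {X : Type} (opn : (X -> Prop) -> Prop) (mv : X -> X -> Prop)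
  (g : Z -> X) : X -> Prop := lc_hull opn mv (omega_raw g).

Definition in_regular_multivector {X : Type} (opn : (X -> Prop) -> Prop)
  (mv : X -> X -> Prop) (A : X -> Prop) : Prop :=
  exists x, regular opn (mv x) /\ incl_set A (mv x).

Definition essential {X : Type} (opn : (X -> Prop) -> Prop) (mv : X -> X -> Prop)
  (g : Z -> X) : Prop :=
  full_solution opn mv g /\
  ~ (in_regular_multivector opn mv (alpha opn mv g) \/
     in_regular_multivector opn mv (omega opn mv g)).

Definition essential_in {X : Type} (opn : (X -> Prop) -> Prop) (mv : X -> X -> Prop)
  (A : X -> Prop) (g : Z -> X) : Prop :=
  essential opn mv g /\ forall t, A (g t).

Definition Inv {X : Type} (opn : (X -> Prop) -> Prop) (mv : X -> X -> Prop)
  (S : X -> Prop) : X -> Prop :=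
  fun x => S x /\ exists g, essential_in opn mv S g /\ g 0%Z = x.

Definition invariant {X : Type} (opn : (X -> Prop) -> Prop) (mv : X -> X -> Prop)
  (S : X -> Prop) : Prop :=
  forall x, Inv opn mv S x <-> S x.

Definition isolated_invariant {X : Type} (opn : (X -> Prop) -> Prop)
  (mv : X -> X -> Prop) (S : X -> Prop) : Prop :=
  invariant opn mv S /\
  exists N : X -> Prop, is_closed opn N /\ incl_set (Pi_set opn mv S) N /\
    forall (x : X) (l : list X),
      is_path opn mv x l -> N x -> Forall N l ->
      S x -> S (last l x) -> S x /\ Forall S l.

Definition link {X : Type} (opn : (X -> Prop) -> Prop) (mv : X -> X -> Prop)
  (S1 S2 : X -> Prop) (g : Z -> X) : Prop :=
  full_solution opn mv g /\
  (exists x, alpha opn mv g x /\ S1 x) /\ (exists y, omega opn mv g y /\ S2 y).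

Definition morse_predecomposition {X : Type} (opn : (X -> Prop) -> Prop)
  (mv : X -> X -> Prop) (P : Type) (M : P -> X -> Prop) : Prop :=
  (forall p q, p <> q -> forall x, M p x -> ~ M q x) /\
  (forall p, isolated_invariant opn mv (M p)) /\
  (forall g, essential_in opn mv (fun _ => True) g ->
     exists p q, link opn mv (M p) (M q) g).

Definition saturated {X : Type} (opn : (X -> Prop) -> Prop) (mv : X -> X -> Prop)
  (T : X -> Prop) : Prop :=
  invariant opn mv T /\
  forall g, essential_in opn mv (fun _ => True) g ->
    incl_set (alpha opn mv g) T -> incl_set (omega opn mv g) T ->
    forall t, T (g t).

(* Main.v *)
Require Import Defs.
From Stdlib Require Import Reals ZArith List.
From Stdlib Require Import Classical FunctionalExtensionality PropExtensionality Lia.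
Import ListNotations.
Set Implicit Arguments.

Lemma minnbhd {X : Type} {opn : (X -> Prop) -> Prop} (HX : finite_T0_space opn) (x : X) :
  exists V, opn V /\ V x /\ forall z, V z -> forall U, opn U -> U x -> U z.
Proof.
  destruct HX as [[HT [H0 [HI HU]]] [[l Hl] _]].
  assert (K : forall l : list X, exists V, opn V /\ V x /\
     forall z, In z l -> V z -> forall U, opn U -> U x -> U z).
  { induction l0 as [|y l0 IH].
    - exists (fun _ => True). split; [exact HT|]. split; [exact I|]. intros z [].
    - destruct IH as [V [HV [Vx HVz]]].
      destruct (classic (forall U, opn U -> U x -> U y)) as [Hy|Hy].
      + exists V. split; [exact HV|]. split; [exact Vx|].
        intros z [<-|Hz] Vz; [exact Hy|exact (HVz z Hz Vz)].
      + apply not_all_ex_not in Hy as [W HW].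
        apply imply_to_and in HW as [oW HW]. apply imply_to_and in HW as [Wx nWy].
        exists (fun z => V z /\ W z). split; [apply HI; assumption|].
        split; [split; assumption|].
        intros z [<-|Hz] [Vz Wz]; [contradiction|exact (HVz z Hz Vz)]. }
  destruct (K l) as [V [HV [Vx HVz]]]. exists V. split; [exact HV|]. split; [exact Vx|].
  intros z Vz. exact (HVz z (Hl z) Vz).
Qed.

Lemma iso_compat (X : Type) (opn : (X -> Prop) -> Prop) mv (HV : multivector_field opn mv)
  S (H : isolated_invariant opn mv S) : compatible mv S.
Proof.
  destruct H as [_ [N [_ [HN Hp]]]].
  destruct HV as [Hr [Hs _]].
  intros x y Sx mxy.
  assert (Ny : N y) by (apply HN; exists x; split; [exact Sx|right; exact mxy]).
  assert (Nx : N x) by (apply HN; exists x; split; [exact Sx|right; apply Hr]).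
  destruct (Hp x [y; x]) as [_ HF].
  - simpl. split; [right; exact mxy|]. split; [right; apply Hs; exact mxy|exact I].
  - exact Nx.
  - constructor; [exact Ny|constructor; [exact Nx|constructor]].
  - exact Sx.
  - exact Sx.
  - inversion HF; assumption.
Qed.

Lemma iso_lc (X : Type) (opn : (X -> Prop) -> Prop) (HX : finite_T0_space opn)
  mv (HV : multivector_field opn mv)
  S (H : isolated_invariant opn mv S) : locally_closed opn S.
Proof.
  pose proof HX as HX'.
  destruct HX as [[HT [H0 [HI HU]]] _].
  destruct H as [_ [N [_ [HN Hp]]]].
  destruct HV as [Hr [Hs _]].
  unfold locally_closed, is_closed.
  set (F := fun U : X -> Prop => opn U /\ forall z, U z -> ~ setD (cl opn S) S z).
  assert (E : (fun x => ~ setD (cl opn S) S x) = (fun x => exists U, F U /\ U x)).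
  { apply functional_extensionality; intro x; apply propositional_extensionality; split.
    - intro Hx. destruct (classic (cl opn S x)) as [Hc|Hc].
      + assert (Sx : S x) by (apply NNPP; intro nS; apply Hx; split; assumption).
        destruct (minnbhd HX' x) as [V [oV [Vx HVz]]].
        exists V. split; [|exact Vx]. split; [exact oV|].
        intros z Vz [clz nSz].
        destruct (minnbhd HX' z) as [W [oW [Wz HWz]]].
        destruct (clz W oW Wz) as [s [Ws Ss]].
        assert (Pzs : Pi opn mv s z).
        { left. intros U oU Uz. exists s. split; [|reflexivity]. exact (HWz s Ws U oU Uz). }
        assert (Pzx : Pi opn mv z x).
        { left. intros U oU Ux. exists z. split; [|reflexivity]. exact (HVz z Vz U oU Ux). }
        destruct (Hp s [z; x]) as [_ HF].
        * simpl. tauto.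
        * apply HN. exists s. split; [exact Ss|right; apply Hr].
        * constructor; [apply HN; exists s; split; assumption|].
          constructor; [apply HN; exists x; split; [exact Sx|right; apply Hr]|constructor].
        * exact Ss.
        * exact Sx.
        * inversion HF; contradiction.
      + unfold cl in Hc. apply not_all_ex_not in Hc as [U HU'].
        apply imply_to_and in HU' as [oU HU']. apply imply_to_and in HU' as [Ux HU'].
        exists U. split; [|exact Ux]. split; [exact oU|].
        intros z Uz [clz _]. destruct (clz U oU Uz) as [y Hy]. apply HU'. exists y. exact Hy.
    - intros [U [[_ HUz] Ux]]. exact (HUz x Ux). }
  rewrite E. apply HU. intros U [oU _]. exact oU.
Qed.

Lemma walk_path (X : Type) (opn : (X -> Prop) -> Prop) mv A v w :
  walk_in opn mv A v w -> exists l, is_path opn mv v (l ++ [w]).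
Proof.
  induction 1.
  - exists []. simpl. tauto.
  - destruct IHwalk_in as [l Hl]. exists (u :: l). simpl. split; assumption.
Qed.

Lemma path_cat (X : Type) (opn : (X -> Prop) -> Prop) mv a b x y :
  is_path opn mv x (a ++ [y]) -> is_path opn mv y b -> is_path opn mv x (a ++ y :: b).
Proof.
  revert x. induction a as [|u a IH]; intros x H1 H2; simpl in *.
  - tauto.
  - destruct H1 as [H1 H1']. split; [exact H1|]. apply IH; assumption.
Qed.

Lemma path_nth (X : Type) (opn : (X -> Prop) -> Prop) mv l x d :
  is_path opn mv x l -> forall k, k < length l ->
  Pi opn mv (nth k (x :: l) d) (nth (S k) (x :: l) d).
Proof.
  revert x. induction l as [|u l IH]; intros x H k Hk; simpl in *.
  - lia.
  - destruct H as [H H']. destruct k as [|k].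
    + exact H.
    + apply (IH u H' k). lia.
Qed.

Lemma nth_app_d (X : Type) (l : list X) (d : X) k : nth k (l ++ [d]) d = nth k l d.
Proof.
  revert k. induction l as [|u l IH]; intros k; simpl.
  - destruct k as [|[|k]]; reflexivity.
  - destruct k; [reflexivity|apply IH].
Qed.

Lemma lc_hull_iff (X : Type) (opn : (X -> Prop) -> Prop) mv (A B : X -> Prop) :
  (forall z, A z <-> B z) -> forall z, lc_hull opn mv A z <-> lc_hull opn mv B z.
Proof.
  intros H z; unfold lc_hull, incl_set; split; intros Hz C H1 H2 H3;
  apply Hz; try assumption; intros w Hw; apply H3, H; assumption.
Qed.

Lemma inreg_iff (X : Type) (opn : (X -> Prop) -> Prop) mv (A B : X -> Prop) :
  (forall z, A z <-> B z) ->
  (in_regular_multivector opn mv A <-> in_regular_multivector opn mv B).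
Proof.
  intros H; unfold in_regular_multivector, incl_set; split;
  intros [x [Hx1 Hx2]]; exists x; split; try assumption; intros w Hw; apply Hx2, H; assumption.
Qed.

Theorem lemma4p10 (X : Type) (opn : (X -> Prop) -> Prop)
  (HX : finite_T0_space opn)
  (mv : X -> X -> Prop) (HV : multivector_field opn mv)
  (HXinv : invariant opn mv (fun _ => True))
  (P : Type) (M : P -> X -> Prop) (HM : morse_predecomposition opn mv M)
  (C : X -> Prop) (HCiso : isolated_invariant opn mv C)
  (HCsc : strongly_connected opn mv C)
  (r : P) (HrC : exists x, M r x /\ C x)
  (Hsat : saturated opn mv (M r)) :
  (forall x, C x -> M r x) /\ (forall p, (exists x, M p x /\ C x) <-> p = r).
Proof.
  destruct HrC as [x [Mx Cx]].
  assert (Hlc : locally_closed opn (M r)) by (apply (@iso_lc X opn HX mv HV); apply HM).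
  assert (Hco : compatible mv (M r)) by (apply (@iso_compat X opn mv HV); apply HM).
  assert (Main : forall y, C y -> M r y).
  { intros y Cy.
    destruct (proj2 (proj1 Hsat x) Mx) as [_ [phi [[[Hfs Hne] HphiM] Hphi0]]].
    destruct (walk_path (HCsc x y Cx Cy)) as [l1 H1].
    destruct (walk_path (HCsc y x Cy Cx)) as [l2 H2].
    set (L0 := l1 ++ y :: l2).
    assert (HL : is_path opn mv x (L0 ++ [x])).
    { unfold L0. rewrite <- app_assoc. simpl. apply path_cat; assumption. }
    set (n := length L0 + 1).
    set (pl := fun k => nth k (x :: L0) x).
    assert (Hstep : forall k, k < n -> Pi opn mv (pl k) (pl (S k))).
    { intros k Hk. pose proof (@path_nth X opn mv _ x x HL k) as Hp.
      unfold pl. change (x :: L0 ++ [x]) with ((x :: L0) ++ [x]) in Hp.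
      rewrite !nth_app_d in Hp. apply Hp. rewrite length_app. simpl. unfold n in Hk. lia. }
    assert (Hpl0 : pl 0 = x) by reflexivity.
    assert (Hpln : pl n = x).
    { unfold pl, n. rewrite Nat.add_1_r. simpl. apply nth_overflow. lia. }
    assert (Hply : pl (length l1 + 1) = y).
    { unfold pl, L0. rewrite Nat.add_1_r. simpl. apply nth_middle. }
    set (g := fun t : Z => if (t <? 0)%Z then phi t
                          else if (t <=? Z.of_nat n)%Z then pl (Z.to_nat t)
                          else phi (t - Z.of_nat n)%Z).
    assert (gneg : forall s, (s <= 0)%Z -> g s = phi s).
    { intros s Hs. unfold g. destruct (Z.ltb_spec s 0); [reflexivity|].
      assert (s = 0%Z) by lia. subst s. destruct (Z.leb_spec 0 (Z.of_nat n)); [|lia].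
      simpl. rewrite Hpl0. symmetry; exact Hphi0. }
    assert (gpos : forall s, (Z.of_nat n < s)%Z -> g s = phi (s - Z.of_nat n)%Z).
    { intros s Hs. unfold g. destruct (Z.ltb_spec s 0); [lia|].
      destruct (Z.leb_spec s (Z.of_nat n)); [lia|reflexivity]. }
    assert (Hgfs : full_solution opn mv g).
    { intro t. unfold g.
      destruct (Z.ltb_spec t 0); destruct (Z.ltb_spec (t+1) 0).
      - apply Hfs.
      - destruct (Z.leb_spec (t+1) (Z.of_nat n)); [|lia].
        assert (t = -1)%Z by lia. subst t. simpl. rewrite Hpl0.
        rewrite <- Hphi0. exact (Hfs (-1)%Z).
      - lia.
      - destruct (Z.leb_spec t (Z.of_nat n)); destruct (Z.leb_spec (t+1) (Z.of_nat n)).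
        + rewrite Z2Nat.inj_add by lia. simpl. rewrite Nat.add_1_r. apply Hstep. lia.
        + assert (t = Z.of_nat n) by lia. subst t. rewrite Nat2Z.id, Hpln.
          replace (Z.of_nat n + 1 - Z.of_nat n)%Z with (0 + 1)%Z by lia.
          rewrite <- Hphi0. apply Hfs.
        + lia.
        + replace (t + 1 - Z.of_nat n)%Z with ((t - Z.of_nat n) + 1)%Z by lia. apply Hfs. }
    assert (Ha : forall z, alpha_raw g z <-> alpha_raw phi z).
    { intro z; unfold alpha_raw; split; intros H t Ht; destruct (H t Ht) as [s [Hs1 Hs2]];
      exists s; (split; [assumption|]).
      - rewrite gneg in Hs2 by lia. exact Hs2.
      - rewrite gneg by lia. exact Hs2. }
    assert (Ho : forall z, omega_raw g z <-> omega_raw phi z).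
    { intro z; unfold omega_raw; split; intros H t Ht.
      - destruct (H (t + Z.of_nat n + 1)%Z ltac:(lia)) as [s [Hs1 Hs2]].
        exists (s - Z.of_nat n)%Z. split; [lia|]. rewrite <- gpos by lia. exact Hs2.
      - destruct (H (t + 1)%Z ltac:(lia)) as [s [Hs1 Hs2]].
        exists (s + Z.of_nat n)%Z. split; [lia|]. rewrite gpos by lia.
        replace (s + Z.of_nat n - Z.of_nat n)%Z with s by lia. exact Hs2. }
    assert (Hess : essential_in opn mv (fun _ => True) g).
    { split; [|intros; exact I]. split; [exact Hgfs|].
      intros [Hr|Hr]; apply Hne.
      - left. unfold alpha in *. revert Hr. apply inreg_iff. apply lc_hull_iff. intro; symmetry; apply Ha.
      - right. unfold omega in *. revert Hr. apply inreg_iff. apply lc_hull_iff. intro; symmetry; apply Ho. }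
    assert (HgM := proj2 Hsat g Hess).
    specialize (HgM ltac:(intros z Hz; apply Hz; [exact Hlc|exact Hco|];
                            intros w Hw; destruct (Hw 0%Z ltac:(lia)) as [s [Hs1 Hs2]];
                            rewrite gneg in Hs2 by lia; subst w; apply HphiM)).
    specialize (HgM ltac:(intros z Hz; apply Hz; [exact Hlc|exact Hco|];
                            intros w Hw; destruct (Hw (Z.of_nat n + 1)%Z ltac:(lia)) as [s [Hs1 Hs2]];
                            rewrite gpos in Hs2 by lia; subst w; apply HphiM)).
    specialize (HgM (Z.of_nat (length l1 + 1))).
    assert (length l1 + 1 <= n) by (unfold n, L0; rewrite length_app; simpl; lia).
    unfold g in HgM. destruct (Z.ltb_spec (Z.of_nat (length l1 + 1)) 0); [lia|].
    destruct (Z.leb_spec (Z.of_nat (length l1 + 1)) (Z.of_nat n)); [|lia].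
    rewrite Nat2Z.id, Hply in HgM. exact HgM. }
  split; [exact Main|].
  intro p; split.
  - intros [z [Mz Cz]]. apply NNPP; intro Hpr.
    exact (proj1 HM p r Hpr z Mz (Main z Cz)).
  - intros ->. exists x. split; assumption.
Qed.
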